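(* Let $\mu>0$ and let $U(a,y)$ denote the parabolic cylinder function (the standard solution of $w''(y)=(\tfrac14 y^2+a)w(y)$ with $U(a,y)\sim y^{-a-1/2}\mathrm{e}^{-y^2/4}$ as $y\to+\infty$). Define, for $\xi\in\mathbb{C}$ away from the zeros of the denominator, $$\Phi_0(\xi)=\frac{1}{2\sqrt{2\mu}}\,\frac{U\!\left(\tfrac12-\tfrac{\mathrm{i}}{4\mu},\,\tfrac{\mathrm{i}\xi}{\sqrt{2\mu}}\right)}{U\!\left(-\tfrac12-\tfrac{\mathrm{i}}{4\mu},\,\tfrac{\mathrm{i}\xi}{\sqrt{2\mu}}\right)}.$$ Then $\Phi_0$ solves the Riccati equation $$\Phi_0(\xi)^2-\xi\,\Phi_0(\xi)=2\mu\,\Phi_0'(\xi)+\frac{\mathrm{i}}{2},$$ (and hence also the second-order equation $-\tfrac12\Phi_0-\tfrac12\xi\Phi_0'+\Phi_0\Phi_0'=\mu\Phi_0''$), and satisfies $\Phi_0(\xi)\sim-\dfrac{\mathrm{i}}{2\xi}$ as $\xi\to-\mathrm{i}\infty$ along the negative imaginary axis.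
   Context: This function is the leading-order inner solution of Burgers' equation $u_t+uu_x=\mu u_{xx}$ with initial data $u(x,0)=1/(1+x^2)$ near $z=\mathrm{i}$ in the small-time limit, with inner variable $\xi=(z-\mathrm{i})/t^{1/2}$ and $u\sim t^{-1/2}\Phi_0(\xi)$. The principal branch conventions for $U$ are the standard ones (as in the NIST Digital Library of Mathematical Functions, Chapter 12). *)

(* Defs.v *)
From Stdlib Require Import Reals.
From Coquelicot Require Import Coquelicot.
Open Scope C_scope.

Definition cexp (z : C) : C :=
  (exp (Re z) * cos (Im z), exp (Re z) * sin (Im z))%R.

Definition rpowC (x : R) (s : C) : C := cexp (s * RtoC (ln x)).

Definition is_PCF_U (a : C) (f : C -> C) : Prop :=
  exists f' : C -> C,
    (forall y : C, is_derive f y (f' y)) /\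
    (forall y : C, is_derive f' y ((y * y / 4 + a) * f y)) /\
    filterlim
      (fun x : R => f (RtoC x) /
         (rpowC x (- a - 1/2) * RtoC (exp (- (x * x) / 4))))
      (Rbar_locally p_infty) (locally (RtoC 1)).

(* The inner solution Phi_0, given U(a1,.) = U1, U(a2,.) = U2 with
   a1 = 1/2 - i/(4 mu), a2 = -1/2 - i/(4 mu). *)
Definition Phi0 (mu : R) (U1 U2 : C -> C) (xi : C) : C :=
  / (2 * RtoC (sqrt (2 * mu))) *
  (U1 (Ci * xi / RtoC (sqrt (2 * mu))) / U2 (Ci * xi / RtoC (sqrt (2 * mu)))).

Definition Phi0_den (mu : R) (U2 : C -> C) (xi : C) : C :=
  U2 (Ci * xi / RtoC (sqrt (2 * mu))).

(* Main.v *)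
Require Import Defs.
From Stdlib Require Import Reals Lra Psatz.
From Coquelicot Require Import Coquelicot.
Open Scope C_scope.

Notation Cder f z l := (@is_derive C_AbsRing C_NormedModule f z l).

Ltac Ceq := match goal with |- ?a = ?b => change (@eq C a b) end; cbv beta.

Lemma Cderiv_char (f : C -> C) (z l : C) :
  Cder f z l <->
  (forall eps : R, (0 < eps)%R -> exists d : R, (0 < d)%R /\
     forall w : C, (Cmod (w - z) < d)%R ->
       (Cmod (f w - f z - (w - z) * l) <= eps * Cmod (w - z))%R).
Proof.
  split.
  - intros [_ H] eps Heps.
    assert (Hl : @is_filter_lim (AbsRing_NormedModule C_AbsRing) (@locally (AbsRing_UniformSpace C_AbsRing) z) z) by (intros P HP; exact HP).
    specialize (H z Hl (mkposreal eps Heps)).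
    destruct H as [d Hd]. exists (pos d). split; [apply cond_pos|].
    intros w Hw. apply (Hd w). exact Hw.
  - intros H. split; [apply is_linear_scal_l|].
    intros x Hx. apply (@is_filter_lim_locally_unique C_AbsRing (AbsRing_NormedModule C_AbsRing)) in Hx. subst x.
    intros eps. destruct (H eps (cond_pos eps)) as [d [Hd0 Hd]].
    exists (mkposreal d Hd0). intros w Hw. apply Hd. exact Hw.
Qed.

Lemma Cmod_sub_sym (a b : C) : Cmod (a - b) = Cmod (b - a).
Proof. replace (a - b) with (- (b - a)) by ring. apply Cmod_opp. Qed.

Lemma Cmod_rev (a b : C) : (Cmod a - Cmod (a - b) <= Cmod b)%R.
Proof.
  assert (H := Cmod_triangle b (a - b)).
  replace (b + (a - b)) with a in H by ring. lra.
Qed.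

Lemma Cmod_tri3 (a b c : C) : (Cmod (a + b + c) <= Cmod a + Cmod b + Cmod c)%R.
Proof.
  eapply Rle_trans; [apply Cmod_triangle|].
  assert (H := Cmod_triangle a b). lra.
Qed.

Lemma Cderiv_cont (f : C -> C) (z l : C) :
  Cder f z l ->
  forall eps : R, (0 < eps)%R -> exists d : R, (0 < d)%R /\
     forall w : C, (Cmod (w - z) < d)%R -> (Cmod (f w - f z) < eps)%R.
Proof.
  intros H eps Heps.
  destruct (proj1 (Cderiv_char f z l) H 1%R Rlt_0_1) as [d [Hd0 Hd]].
  set (d' := Rmin d (eps / (2 * (Cmod l + 1)))).
  assert (Hl0 := Cmod_ge_0 l).
  assert (Hd'0 : (0 < d')%R).
  { unfold d'. apply Rmin_pos; auto. apply Rdiv_lt_0_compat; lra. }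
  exists d'. split; auto. intros w Hw.
  assert (Hw1 : (Cmod (w - z) < d)%R) by (eapply Rlt_le_trans; [exact Hw| apply Rmin_l]).
  assert (Hw2 : (Cmod (w - z) < eps / (2 * (Cmod l + 1)))%R)
     by (eapply Rlt_le_trans; [exact Hw| apply Rmin_r]).
  specialize (Hd w Hw1).
  replace (f w - f z) with ((f w - f z - (w - z) * l) + (w - z) * l) by ring.
  eapply Rle_lt_trans; [apply Cmod_triangle|]. rewrite Cmod_mult.
  assert (Hwz := Cmod_ge_0 (w - z)).
  assert (Cmod (w - z) * (2 * (Cmod l + 1)) < eps)%R.
  { apply (Rmult_lt_compat_r (2 * (Cmod l + 1))) in Hw2; [|lra].
    field_simplify in Hw2; lra. }
  nra.
Qed.

Lemma is_derive_Cinv (g : C -> C) (z g' : C) :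
  Cder g z g' -> g z <> 0 ->
  Cder (fun w => / g w) z (- g' / (g z * g z)).
Proof.
  intros Hg Hz.
  set (m := Cmod (g z)).
  assert (Hm : (0 < m)%R) by (apply Cmod_gt_0; auto).
  apply Cderiv_char. intros eps Heps.
  destruct (Cderiv_cont g z g' Hg (m / 2)%R ltac:(lra)) as [d1 [Hd10 Hd1]].
  destruct (proj1 (Cderiv_char g z g') Hg (eps * m * m / 4)%R
     ltac:(apply Rdiv_lt_0_compat; [|lra]; repeat apply Rmult_lt_0_compat; lra)) as [d2 [Hd20 Hd2]].
  assert (Hg0 := Cmod_ge_0 g').
  set (e3 := (eps * m * m * m / (4 * (Cmod g' + 1)))%R).
  assert (He3 : (0 < e3)%R).
  { unfold e3. apply Rdiv_lt_0_compat; [|lra]. repeat apply Rmult_lt_0_compat; lra. }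
  destruct (Cderiv_cont g z g' Hg e3 He3) as [d3 [Hd30 Hd3]].
  exists (Rmin d1 (Rmin d2 d3)). split.
  { repeat apply Rmin_pos; auto. }
  intros w Hw.
  assert (Hw1 : (Cmod (w - z) < d1)%R) by (eapply Rlt_le_trans; [exact Hw| apply Rmin_l]).
  assert (Hw2 : (Cmod (w - z) < d2)%R) by (eapply Rlt_le_trans; [exact Hw|];
     eapply Rle_trans; [apply Rmin_r| apply Rmin_l]).
  assert (Hw3 : (Cmod (w - z) < d3)%R) by (eapply Rlt_le_trans; [exact Hw|];
     eapply Rle_trans; [apply Rmin_r| apply Rmin_r]).
  specialize (Hd1 w Hw1). specialize (Hd2 w Hw2). specialize (Hd3 w Hw3).
  assert (Hgw : (m / 2 <= Cmod (g w))%R).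
  { assert (H := Cmod_rev (g z) (g w)). rewrite Cmod_sub_sym in H. fold m in H. lra. }
  assert (Hgw0 : g w <> 0).
  { intro E. rewrite E, Cmod_0 in Hgw. lra. }
  set (A := g w - g z - (w - z) * g').
  set (B := g w - g z).
  fold A in Hd2. fold B in Hd1, Hd3.
  replace (/ g w - / g z - (w - z) * (- g' / (g z * g z)))
    with (- (A / (g w * g z)) + ((w - z) * g' * B) / (g w * g z * g z)).
  2:{ unfold A, B. field. auto. }
  eapply Rle_trans; [apply Cmod_triangle|].
  rewrite Cmod_opp, !Cmod_div, !Cmod_mult; try (repeat apply Cmult_neq_0; auto).
  fold m.
  assert (HA := Cmod_ge_0 A). assert (HB := Cmod_ge_0 B).
  assert (Hwz := Cmod_ge_0 (w - z)).
  set (gw := Cmod (g w)) in *.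
  assert (T1 : (Cmod A / (gw * m) <= 2 * Cmod A / (m * m))%R).
  { apply Rle_div_l. nra. 
    replace (2 * Cmod A / (m * m) * (gw * m))%R with (Cmod A * (2 * gw / m))%R by (field; lra).
    rewrite <- (Rmult_1_r (Cmod A)) at 1. apply Rmult_le_compat_l; auto.
    apply Rle_div_r; lra. }
  assert (T2 : (Cmod (w - z) * Cmod g' * Cmod B / (gw * m * m) <=
                2 * (Cmod (w - z) * Cmod g' * Cmod B) / (m * m * m))%R).
  { set (X := (Cmod (w - z) * Cmod g' * Cmod B)%R).
    assert (0 <= X)%R by (unfold X; repeat apply Rmult_le_pos; auto).
    apply Rle_div_l. assert (0 < gw)%R by lra. repeat apply Rmult_lt_0_compat; lra.
    replace (2 * X / (m * m * m) * (gw * m * m))%R with (X * (2 * gw / m))%R by (field; lra).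
    rewrite <- (Rmult_1_r X) at 1. apply Rmult_le_compat_l; auto.
    apply Rle_div_r; lra. }
  assert (T3 : (2 * Cmod A / (m * m) <= eps / 2 * Cmod (w - z))%R).
  { apply Rle_div_l. nra.
    replace (eps / 2 * Cmod (w - z) * (m * m))%R with (2 * (eps * m * m / 4 * Cmod (w - z)))%R by (field; lra).
    lra. }
  assert (T4 : (2 * (Cmod (w - z) * Cmod g' * Cmod B) / (m * m * m) <= eps / 2 * Cmod (w - z))%R).
  { apply Rle_div_l. repeat apply Rmult_lt_0_compat; lra.
    assert (Cmod g' * Cmod B <= e3 * Cmod g')%R by nra.
    assert (e3 * Cmod g' <= eps * m * m * m / 4)%R.
    { assert (0 < eps * m * m * m)%R.
      { apply Rmult_lt_0_compat; [|lra]. apply Rmult_lt_0_compat; [|lra]. apply Rmult_lt_0_compat; lra. }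
      unfold e3.
      replace (eps * m * m * m / (4 * (Cmod g' + 1)) * Cmod g')%R
        with (eps * m * m * m / 4 * (Cmod g' / (Cmod g' + 1)))%R by (field; lra).
      assert (Cmod g' / (Cmod g' + 1) <= 1)%R.
      { unfold Rdiv. apply (Rmult_le_reg_r (Cmod g' + 1)); [lra|].
        rewrite Rmult_assoc, Rinv_l; lra. }
      assert (0 <= Cmod g' / (Cmod g' + 1))%R by (apply Rdiv_le_0_compat; lra).
      nra. }
    assert (Cmod (w - z) * (Cmod g' * Cmod B) <= Cmod (w - z) * (eps * m * m * m / 4))%R.
    { apply Rmult_le_compat_l; lra. }
    replace (eps / 2 * Cmod (w - z) * (m * m * m))%R with (2 * (Cmod (w - z) * (eps * m * m * m / 4)))%R by field.
    lra. }
  lra.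
Qed.

Lemma Cd_of_abs (f : C -> C) z l :
  @is_derive C_AbsRing (AbsRing_NormedModule C_AbsRing) f z l -> Cder f z l.
Proof.
  intros [_ H]. apply Cderiv_char. intros eps Heps.
  assert (Hl : @is_filter_lim (AbsRing_NormedModule C_AbsRing) (@locally (AbsRing_UniformSpace C_AbsRing) z) z) by (intros P HP; exact HP).
  specialize (H z Hl (mkposreal eps Heps)).
  destruct H as [d Hd]. exists (pos d). split; [apply cond_pos|].
  intros w Hw. apply (Hd w). exact Hw.
Qed.

Lemma Cd_to_abs (f : C -> C) z l :
  Cder f z l -> @is_derive C_AbsRing (AbsRing_NormedModule C_AbsRing) f z l.
Proof.
  intros H0. pose proof (proj1 (Cderiv_char f z l) H0) as H. split; [apply is_linear_scal_l|].
  intros x Hx. apply (@is_filter_lim_locally_unique C_AbsRing (AbsRing_NormedModule C_AbsRing)) in Hx. subst x.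
  intros eps. destruct (H eps (cond_pos eps)) as [d [Hd0 Hd]].
  exists (mkposreal d Hd0). intros w Hw. apply Hd. exact Hw.
Qed.

Lemma Cd_mult (f g : C -> C) z a b :
  Cder f z a -> Cder g z b -> Cder (fun w => f w * g w) z (a * g z + f z * b).
Proof. intros Hf Hg. apply Cd_of_abs. apply Cd_to_abs in Hf. apply Cd_to_abs in Hg.
  exact (is_derive_mult f g z a b Hf Hg Cmult_comm). Qed.
Lemma Cd_plus (f g : C -> C) z a b :
  Cder f z a -> Cder g z b -> Cder (fun w => f w + g w) z (a + b).
Proof. intros Hf Hg. exact (is_derive_plus f g z a b Hf Hg). Qed.

Lemma Cd_minus (f g : C -> C) z a b :
  Cder f z a -> Cder g z b -> Cder (fun w => f w - g w) z (a - b).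
Proof. intros Hf Hg. exact (is_derive_minus f g z a b Hf Hg). Qed.

Lemma Cd_const (c z : C) : Cder (fun _ : C => c) z (RtoC 0).
Proof. exact (@is_derive_const C_AbsRing C_NormedModule c z). Qed.

Lemma Cd_id (z : C) : Cder (fun w : C => w) z (RtoC 1).
Proof. apply Cd_of_abs. exact (@is_derive_id C_AbsRing z). Qed.

Lemma Cd_comp (f g : C -> C) z a b :
  Cder f (g z) a -> Cder g z b -> Cder (fun w => f (g w)) z (b * a).
Proof. intros Hf Hg. apply Cd_to_abs in Hg. exact (@is_derive_comp C_AbsRing C_NormedModule f g z a b Hf Hg). Qed.

Lemma Cd_ext (f g : C -> C) z a b :
  (forall w, f w = g w) -> a = b -> Cder f z a -> Cder g z b.
Proof. intros H E Hf. subst b. exact (is_derive_ext f g z a H Hf). Qed.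

Lemma im_le_Cmod (c : C) : (Rabs (Im c) <= Cmod c)%R.
Proof.
  assert (H := Cmod2_alt c). assert (H0 := Cmod_ge_0 c).
  rewrite <- (Rabs_pos_eq (Cmod c) H0). apply Rsqr_le_abs_0. unfold Rsqr. simpl in H. nra.
Qed.

Lemma line_deriv_gen (p : C -> R) (f : C -> C) (z0 d : C) (t : R) (l : C) :
  (forall x y, p (x - y) = (p x - p y)%R) ->
  (forall x, (Rabs (p x) <= Cmod x)%R) ->
  (forall (h : R) x, p (RtoC h * x) = (h * p x)%R) ->
  Cder f (z0 + RtoC t * d) l ->
  is_derive (fun s : R => p (f (z0 + RtoC s * d))) t (p (d * l)).
Proof.
  intros Hsub Hab Hsc Hf. apply is_derive_Reals. intros eps Heps.
  assert (Hd := Cmod_ge_0 d).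
  destruct (proj1 (Cderiv_char f _ l) Hf (eps / 2 / (Cmod d + 1))%R
     ltac:(apply Rdiv_lt_0_compat; lra)) as [del [Hdel0 Hdel]].
  assert (Hp : (0 < del / (Cmod d + 1))%R) by (apply Rdiv_lt_0_compat; lra).
  exists (mkposreal _ Hp). simpl. intros h Hh0 Hh.
  assert (Hw : z0 + RtoC (t + h) * d - (z0 + RtoC t * d) = RtoC h * d).
  { rewrite RtoC_plus. ring. }
  assert (Hmod : Cmod (RtoC h * d) = (Rabs h * Cmod d)%R) by (rewrite Cmod_mult, Cmod_R; auto).
  assert (Hlt : (Cmod (z0 + RtoC (t + h) * d - (z0 + RtoC t * d)) < del)%R).
  { rewrite Hw, Hmod.
    apply (Rmult_lt_compat_r (Cmod d + 1)) in Hh; [|lra].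
    unfold Rdiv in Hh. rewrite Rmult_assoc, Rinv_l in Hh by lra.
    assert (0 <= Rabs h)%R by apply Rabs_pos. nra. }
  specialize (Hdel _ Hlt). rewrite Hw, Hmod in Hdel.
  set (A := f (z0 + RtoC (t + h) * d) - f (z0 + RtoC t * d) - RtoC h * d * l) in Hdel.
  assert (E : ((p (f (z0 + RtoC (t + h) * d)%C) - p (f (z0 + RtoC t * d)%C)) / h - p (d * l)%C)%R
              = (p A / h)%R).
  { unfold A. rewrite !Hsub. replace (RtoC h * d * l) with (RtoC h * (d * l)) by ring.
    rewrite Hsc. field. auto. }
  rewrite E. unfold Rdiv. rewrite Rabs_mult, Rabs_inv.
  assert (Hh1 : (0 < Rabs h)%R) by (apply Rabs_pos_lt; auto).
  apply (Rmult_lt_reg_r (Rabs h)); auto.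
  rewrite Rmult_assoc, Rinv_l by lra. rewrite Rmult_1_r.
  eapply Rle_lt_trans; [apply Hab|]. eapply Rle_lt_trans; [exact Hdel|].
  assert (eps / 2 / (Cmod d + 1) * Cmod d <= eps / 2)%R.
  { unfold Rdiv. rewrite Rmult_assoc. 
    assert (/ (Cmod d + 1) * Cmod d <= 1)%R.
    { apply (Rmult_le_reg_l (Cmod d + 1)); [lra|]. rewrite <- Rmult_assoc, Rinv_r by lra. lra. }
    assert (0 <= / (Cmod d + 1) * Cmod d)%R.
    { apply Rmult_le_pos; auto. left. apply Rinv_0_lt_compat. lra. }
    nra. }
  nra.
Qed.

Lemma line_deriv_Re (f : C -> C) (z0 d : C) (t : R) (l : C) :
  Cder f (z0 + RtoC t * d) l ->
  is_derive (fun s : R => Re (f (z0 + RtoC s * d))) t (Re (d * l)).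
Proof.
  apply line_deriv_gen.
  - intros x y. reflexivity.
  - apply re_le_Cmod.
  - intros h x. destruct x as [x1 x2]. unfold Cmult, RtoC; simpl. ring.
Qed.

Lemma line_deriv_Im (f : C -> C) (z0 d : C) (t : R) (l : C) :
  Cder f (z0 + RtoC t * d) l ->
  is_derive (fun s : R => Im (f (z0 + RtoC s * d))) t (Im (d * l)).
Proof.
  apply line_deriv_gen.
  - intros x y. reflexivity.
  - apply im_le_Cmod.
  - intros h x. destruct x as [x1 x2]. unfold Cmult, RtoC; simpl. ring.
Qed.

Lemma mono_dec (f df : R -> R) (a b : R) :
  (a <= b)%R -> (forall t, (a <= t <= b)%R -> is_derive f t (df t)) ->
  (forall t, (a <= t <= b)%R -> (df t <= 0)%R) -> (f b <= f a)%R.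
Proof.
  intros Hab Hd Hneg.
  destruct (MVT_gen f a b df) as [c [Hc E]].
  - intros x Hx. rewrite Rmin_left, Rmax_right in Hx by lra. apply Hd. lra.
  - intros x Hx. rewrite Rmin_left, Rmax_right in Hx by lra.
    apply continuity_pt_filterlim. apply (ex_derive_continuous f x).
    exists (df x). apply Hd. lra.
  - rewrite Rmin_left, Rmax_right in Hc by lra.
    assert (df c <= 0)%R by (apply Hneg; lra). nra.
Qed.

Lemma mono_inc (f df : R -> R) (a b : R) :
  (a <= b)%R -> (forall t, (a <= t <= b)%R -> is_derive f t (df t)) ->
  (forall t, (a <= t <= b)%R -> (0 <= df t)%R) -> (f a <= f b)%R.
Proof.
  intros Hab Hd Hpos.
  assert (H := mono_dec (fun t => - f t)%R (fun t => - df t)%R a b Hab).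
  cut (- f b <= - f a)%R; [lra|]. apply H.
  - intros t Ht. apply (is_derive_opp f t (df t)). auto.
  - intros t Ht. specialize (Hpos t Ht). lra.
Qed.

Lemma Rd_mult (f g : R -> R) t a b :
  is_derive f t a -> is_derive g t b -> is_derive (fun s => f s * g s)%R t (a * g t + f t * b)%R.
Proof. intros Hf Hg. exact (is_derive_mult f g t a b Hf Hg Rmult_comm). Qed.

Lemma Rd_plus (f g : R -> R) t a b :
  is_derive f t a -> is_derive g t b -> is_derive (fun s => f s + g s)%R t (a + b)%R.
Proof. intros Hf Hg. exact (is_derive_plus f g t a b Hf Hg). Qed.

Lemma Rd_ext (f g : R -> R) t a b :
  (forall s, f s = g s) -> a = b -> is_derive f t a -> is_derive g t b.
Proof. intros H E Hf. subst b. exact (is_derive_ext f g t a H Hf). Qed.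

Lemma CS_C (a b : C) : (Re a * Re b + Im a * Im b <= Cmod a * Cmod b)%R.
Proof.
  assert (Ha := Cmod2_alt a). assert (Hb := Cmod2_alt b).
  assert (Ha0 := Cmod_ge_0 a). assert (Hb0 := Cmod_ge_0 b).
  destruct a as [a1 a2]; destruct b as [b1 b2]. simpl in *.
  set (A := Cmod (a1, a2)) in *. set (B := Cmod (b1, b2)) in *.
  destruct (Rle_dec (a1 * b1 + a2 * b2) 0) as [Hn|Hp]; [nra|].
  apply Rsqr_incr_0_var; [|nra]. unfold Rsqr.
  assert ((a1 * b1 + a2 * b2) * (a1 * b1 + a2 * b2) <= (a1*a1 + a2*a2) * (b1*b1+b2*b2))%R.
  { assert (H := Rle_0_sqr (a1*b2 - a2*b1)). unfold Rsqr in H.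
    replace ((a1*a1 + a2*a2) * (b1*b1+b2*b2))%R with
      ((a1 * b1 + a2 * b2) * (a1 * b1 + a2 * b2) + (a1*b2 - a2*b1) * (a1*b2 - a2*b1))%R by ring.
    lra. }
  nra.
Qed.

Lemma Cmod_sq (c : C) : (Cmod c * Cmod c = Re c * Re c + Im c * Im c)%R.
Proof. assert (H := Cmod2_alt c). simpl in H. lra. Qed.

Lemma ode_unique (g G q : C -> C) (y0 : C) (Q : R -> R) :
  (forall y, Cder g y (G y)) -> (forall y, Cder G y (q y * g y)) ->
  (forall r y, (Cmod y <= r)%R -> (Cmod (q y) <= Q r)%R) ->
  g y0 = 0 -> G y0 = 0 -> forall y, g y = 0.
Proof.
  intros Hg HG HQ H0 H1 y.
  set (d := y - y0).
  set (Qb := Rmax 0 (Q (Cmod y0 + Cmod d)%R)).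
  assert (HQb0 : (0 <= Qb)%R) by apply Rmax_l.
  assert (Hd0 := Cmod_ge_0 d).
  set (M := (Cmod d * (1 + Qb))%R).
  set (h1 := fun t : R => Re (g (y0 + RtoC t * d))).
  set (h2 := fun t : R => Im (g (y0 + RtoC t * d))).
  set (k1 := fun t : R => Re (G (y0 + RtoC t * d))).
  set (k2 := fun t : R => Im (G (y0 + RtoC t * d))).
  set (E := fun t : R => (h1 t * h1 t + h2 t * h2 t + k1 t * k1 t + k2 t * k2 t)%R).
  set (dG := fun t : R => d * G (y0 + RtoC t * d)).
  set (dq := fun t : R => d * (q (y0 + RtoC t * d) * g (y0 + RtoC t * d))).
  set (dE := fun t : R => (2 * (h1 t * Re (dG t) + h2 t * Im (dG t)
                             + k1 t * Re (dq t) + k2 t * Im (dq t)))%R).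
  assert (HE : forall t, is_derive E t (dE t)).
  { intro t.
    assert (D1 : is_derive h1 t (Re (dG t))) by apply line_deriv_Re, Hg.
    assert (D2 : is_derive h2 t (Im (dG t))) by apply line_deriv_Im, Hg.
    assert (D3 : is_derive k1 t (Re (dq t))) by apply line_deriv_Re, HG.
    assert (D4 : is_derive k2 t (Im (dq t))) by apply line_deriv_Im, HG.
    eapply Rd_ext; [intro s; reflexivity| |].
    2:{ apply Rd_plus; [apply Rd_plus; [apply Rd_plus|]|];
        apply Rd_mult; eassumption. }
    unfold dE. match goal with |- ?a = ?b => change (@eq R a b) end. ring. }
  set (phi := fun t : R => (exp (- M * t) * E t)%R).
  set (dphi := fun t : R => (exp (- M * t) * (dE t - M * E t))%R).
  assert (Hphi : forall t, is_derive phi t (dphi t)).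
  { intro t. eapply Rd_ext; [intro s; reflexivity| |].
    2:{ apply Rd_mult; [|apply HE].
        apply (is_derive_comp exp (fun s => - M * s)%R t).
        - apply is_derive_exp.
        - eapply Rd_ext; [intro s; reflexivity| |].
          2:{ apply Rd_mult; [apply is_derive_const| apply is_derive_id]. }
          reflexivity. }
    unfold dphi. simpl. unfold mult, zero, one, scal; simpl. unfold mult; simpl. ring. }
  assert (Hneg : forall t, (0 <= t <= 1)%R -> (dphi t <= 0)%R).
  { intros t Ht. unfold dphi.
    assert (Hex := exp_pos (- M * t)).
    cut (dE t <= M * E t)%R; [intro; nra|].
    set (w := y0 + RtoC t * d).
    assert (Hw : (Cmod w <= Cmod y0 + Cmod d)%R).
    { unfold w. eapply Rle_trans; [apply Cmod_triangle|]. rewrite Cmod_mult, Cmod_R.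
      rewrite Rabs_pos_eq by lra. nra. }
    assert (Hq : (Cmod (q w) <= Qb)%R).
    { eapply Rle_trans; [apply HQ; exact Hw| apply Rmax_r]. }
    assert (C1 := CS_C (g w) (dG t)). assert (C2 := CS_C (G w) (dq t)).
    unfold dG, dq in C1, C2. fold w in C1, C2.
    rewrite Cmod_mult in C1. rewrite !Cmod_mult in C2.
    assert (S1 := Cmod_sq (g w)). assert (S2 := Cmod_sq (G w)).
    assert (P1 := Cmod_ge_0 (g w)). assert (P2 := Cmod_ge_0 (G w)). assert (P3 := Cmod_ge_0 (q w)).
    unfold dE, E, h1, h2, k1, k2, dG, dq. fold w.
    set (a := Cmod (g w)) in *. set (b := Cmod (G w)) in *.
    assert (T : (a * (Cmod d * b) + b * (Cmod d * (Cmod (q w) * a)) <= Cmod d * (1 + Qb) * (a * b))%R).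
    { assert (Cmod d * (Cmod (q w) * (a * b)) <= Cmod d * (Qb * (a * b)))%R.
      { apply Rmult_le_compat_l; auto. apply Rmult_le_compat_r; auto. apply Rmult_le_pos; auto. }
      nra. }
    assert (T2 : (2 * (a * b) <= a * a + b * b)%R) by (assert (HH := Rle_0_sqr (a - b)); unfold Rsqr in HH; lra).
    unfold M.
    assert (0 <= Cmod d * (1 + Qb))%R by (apply Rmult_le_pos; lra).
    nra. }
  assert (Hmono := mono_dec phi dphi 0 1 ltac:(lra) (fun t _ => Hphi t) Hneg).
  assert (HE0 : E 0%R = 0%R).
  { unfold E, h1, h2, k1, k2. replace (y0 + RtoC 0 * d) with y0 by (rewrite Cmult_0_l; ring).
    rewrite H0, H1. simpl. ring. }
  unfold phi in Hmono. rewrite HE0, Rmult_0_r in Hmono.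
  assert (Hex := exp_pos (- M * 1)).
  assert (HE1 : (E 1 <= 0)%R).
  { apply (Rmult_le_reg_l (exp (- M * 1))); auto. lra. }
  assert (Hy : y0 + RtoC 1 * d = y) by (unfold d; ring).
  unfold E, h1, h2, k1, k2 in HE1. rewrite Hy in HE1.
  apply Cmod_eq_0.
  assert (S := Cmod_sq (g y)). assert (P := Cmod_ge_0 (g y)).
  nra.
Qed.

Lemma real_deriv_Re (F F' : C -> C) (s : R) :
  (forall y, Cder F y (F' y)) ->
  is_derive (fun t : R => Re (F (RtoC t))) s (Re (F' (RtoC s))).
Proof.
  intros HF.
  assert (H := line_deriv_Re F 0 1 s (F' (RtoC s))).
  replace (0 + RtoC s * 1) with (RtoC s) in H by ring.
  specialize (H (HF _)).
  eapply Rd_ext; [| |exact H].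
  - intro t. simpl. f_equal. f_equal. ring.
  - f_equal. ring.
Qed.

Lemma w_deriv (n : nat) (s : R) : (0 < s)%R ->
  is_derive (fun s => exp (-(s*s)/2) / s^(S n))%R s
  (- s * exp(-(s*s)/2) / s^(S n) - INR (S n) * exp(-(s*s)/2) / s^(S (S n)))%R.
Proof.
  intros H. assert (s ^ n <> 0)%R by (apply pow_nonzero; lra). auto_derive.
  - apply Rmult_integral_contrapositive; split; lra.
  - simpl. set (p := (s ^ n)%R) in *.
    set (c := match n with | 0%nat => 1%R | S _ => (INR n + 1)%R end).
    replace (- (s * s) * / 2)%R with (-(s*s)/2)%R by (unfold Rdiv; ring).
    set (e := exp (-(s*s)/2)). field. split; lra.
Qed.

Lemma exp_sq4 (t : R) : (exp (-(t*t)/4) * exp (-(t*t)/4) = exp (-(t*t)/2))%R.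
Proof. rewrite <- exp_plus. f_equal. field. Qed.

Lemma exp_sq4_inv (t : R) : (exp (-(t*t)/4) * exp ((t*t)/4) = 1)%R.
Proof. rewrite <- exp_plus. replace (-(t*t)/4 + (t*t)/4)%R with 0%R by field. apply exp_0. Qed.

Lemma exp_sq4_ge1 (t : R) : (1 <= exp ((t*t)/4))%R.
Proof.
  rewrite <- exp_0. destruct (Req_dec (t*t/4) 0) as [E|E]; [rewrite E; lra|].
  left. apply exp_increasing. assert (0 <= t*t)%R by nra. lra.
Qed.

Lemma inv_pow_le1 (t : R) (n : nat) : (1 <= t)%R -> (0 < / t ^ n <= 1)%R.
Proof.
  intros Ht. assert (H := pow_R1_Rle t n Ht). split.
  - apply Rinv_0_lt_compat. lra.
  - rewrite <- Rinv_1. apply Rinv_le_contravar; lra.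
Qed.

Lemma abs_le_inv (x c : R) : (Rabs x <= c)%R -> (- c <= x <= c)%R.
Proof. unfold Rabs. destruct (Rcase_abs x); lra. Qed.

Lemma one_sided (f f' : C -> C) (a : C) (beta : nat) (Cc X : R) :
  (forall y, Cder f y (f' y)) -> (forall y, Cder f' y ((y*y/4 + a) * f y)) ->
  (1 <= X)%R ->
  (forall x : R, (X <= x)%R -> (Cmod (f x) <= Cc / x^beta * exp(-(x*x)/4))%R) ->
  forall x : R, (X <= x)%R ->
   (exp(-(x*x)/4) * Re (f' x + RtoC x / 2 * f x)
     <= Cmod (a + 1/2) * Cc * (exp(-(x*x)/2) / x^(S beta)))%R.
Proof.
  intros Hf Hf' HX Hb x0 Hx0.
  assert (HCc : (0 <= Cc)%R).
  { specialize (Hb X (Rle_refl _)). assert (H0 := Cmod_ge_0 (f X)).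
    assert (H1 := inv_pow_le1 X beta HX). assert (H2 := exp_pos (-(X*X)/4)).
    unfold Rdiv in Hb. destruct (Rle_dec 0 Cc); auto.
    assert (Cc * / X ^ beta < 0)%R by nra. nra. }
  set (K := (Cmod (a + 1/2) * Cc)%R).
  assert (HK : (0 <= K)%R) by (unfold K; apply Rmult_le_pos; auto; apply Cmod_ge_0).
  set (Vc := fun y : C => f' y + y / 2 * f y).
  set (Vc' := fun y : C => (y*y/4 + a) * f y + (1/2 * f y + y/2 * f' y)).
  assert (HVc : forall y, Cder Vc y (Vc' y)).
  { intro y. unfold Vc, Vc'. apply Cd_plus; [apply Hf'|].
    eapply Cd_ext; [intro w; reflexivity| |].
    2:{ apply Cd_mult; [|apply Hf].
        eapply Cd_ext; [intro w; reflexivity| |].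
        2:{ apply Cd_mult; [apply Cd_id|apply Cd_const]. }
        reflexivity. }
    simpl. field_simplify_eq; auto. 
    all: try (intro E; injection E; lra). }
  set (R1 := fun s : R => Re (Vc (RtoC s))).
  set (V1 := fun s : R => (exp(-(s*s)/4) * R1 s)%R).
  set (dV1 := fun s : R => (exp(-(s*s)/4) * Re ((a + 1/2) * f (RtoC s)))%R).
  assert (HV1 : forall s, is_derive V1 s (dV1 s)).
  { intro s. eapply Rd_ext; [intro t; reflexivity| |].
    2:{ apply Rd_mult; [|apply (real_deriv_Re Vc Vc' s HVc)].
        apply (is_derive_comp exp (fun s => -(s*s)/4)%R s).
        - apply is_derive_exp.
        - auto_derive; auto. }
    unfold dV1, R1, Vc, Vc'. simpl. unfold scal, mult; simpl.
    destruct (f (RtoC s)) as [p1 p2]. destruct (f' (RtoC s)) as [q1 q2]. destruct a as [a1 a2].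
    simpl. unfold mult; simpl. field. }
  set (w := fun s : R => (exp (-(s*s)/2) / s^(S beta))%R).
  set (dw := fun s : R => (- s * exp(-(s*s)/2) / s^(S beta) - INR (S beta) * exp(-(s*s)/2) / s^(S (S beta)))%R).
  assert (Bnd : forall t, (X <= t)%R -> (- (K * (exp (-(t*t)/2) / t^beta)) <= dV1 t)%R).
  { intros t Ht. unfold dV1.
    assert (E1 := re_le_Cmod ((a + 1/2) * f (RtoC t))). rewrite Cmod_mult in E1.
    assert (E2 := Hb t Ht). assert (E3 := exp_pos (-(t*t)/4)).
    assert (E4 := Cmod_ge_0 (a + 1/2)).
    assert (E5 : (Cmod (a + 1 / 2) * Cmod (f t) <= Cmod (a + 1/2) * (Cc / t ^ beta * exp (- (t * t) / 4)))%R)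
      by (apply Rmult_le_compat_l; auto).
    assert (E6 : (exp (-(t*t)/4) * (Cmod (a + 1/2) * (Cc / t ^ beta * exp (- (t * t) / 4)))
                 = K * (exp (-(t*t)/2) / t^beta))%R).
    { rewrite <- exp_sq4. unfold K. unfold Rdiv. ring. }
    apply abs_le_inv in E1. 
    assert (- (Cmod (a + 1 / 2) * Cmod (f t)) <= Re ((a + 1 / 2) * f t))%R by lra.
    assert (exp (-(t*t)/4) * (- (Cmod (a + 1 / 2) * Cmod (f t))) <= exp (-(t*t)/4) * Re ((a + 1 / 2) * f t))%R
      by (apply Rmult_le_compat_l; lra).
    assert (exp (-(t*t)/4) * (Cmod (a + 1 / 2) * Cmod (f t)) <= exp (-(t*t)/4) * (Cmod (a + 1/2) * (Cc / t ^ beta * exp (- (t * t) / 4))))%R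
      by (apply Rmult_le_compat_l; lra).
    lra. }
  assert (Bw : forall t, (1 <= t)%R -> (exp (-(t*t)/2) / t^beta <= - dw t)%R).
  { intros t Ht. unfold dw.
    assert (P1 := pow_R1_Rle t beta Ht). assert (P2 := exp_pos (-(t*t)/2)).
    assert (0 <= INR (S beta) * exp (-(t*t)/2) / t^(S (S beta)))%R.
    { apply Rdiv_le_0_compat. apply Rmult_le_pos; [apply pos_INR|lra].
      apply pow_lt. lra. }
    assert (- t * exp (- (t * t) / 2) / t ^ S beta = - (exp (-(t*t)/2) / t^beta))%R.
    { simpl. field. split; lra. }
    lra. }
  destruct (Rle_dec (V1 x0) (K * w x0)) as [ok|nok].
  { unfold V1, R1, Vc, w in ok. exact ok. }
  exfalso.
  set (del := (V1 x0 - K * w x0)%R).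
  assert (Hdel : (0 < del)%R) by (unfold del; lra).
  assert (ClA : forall y, (x0 <= y)%R -> (del <= V1 y - K * w y)%R).
  { intros y Hy.
    assert (H := mono_inc (fun s => V1 s - K * w s)%R (fun s => dV1 s - K * dw s)%R x0 y Hy).
    unfold del. apply H.
    - intros t Ht. apply (is_derive_minus V1 (fun s => K * w s)%R t). apply HV1.
      apply (is_derive_scal w t K (dw t)). apply w_deriv. lra.
    - intros t Ht. assert (X <= t)%R by lra.
      specialize (Bnd t H0). specialize (Bw t ltac:(lra)).
      assert (K * (exp (- (t * t) / 2) / t ^ beta) <= K * - dw t)%R by (apply Rmult_le_compat_l; auto).
      lra. }
  set (u1 := fun s : R => (exp ((s*s)/4) * Re (f (RtoC s)))%R).
  set (du1 := fun s : R => (exp ((s*s)/4) * R1 s)%R).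
  assert (Hu1 : forall s, is_derive u1 s (du1 s)).
  { intro s. eapply Rd_ext; [intro t; reflexivity| |].
    2:{ apply Rd_mult; [|apply (real_deriv_Re f f' s Hf)].
        apply (is_derive_comp exp (fun s => (s*s)/4)%R s).
        - apply is_derive_exp.
        - auto_derive; auto. }
    unfold du1, R1, Vc. simpl. unfold scal, mult; simpl. unfold mult; simpl.
    destruct (f (RtoC s)) as [p1 p2]. destruct (f' (RtoC s)) as [q1 q2].
    simpl. field. }
  assert (ClB : forall t, (x0 <= t)%R -> (del <= du1 t)%R).
  { intros t Ht. specialize (ClA t Ht).
    assert (Hw0 : (0 <= w t)%R).
    { unfold w. apply Rdiv_le_0_compat. left; apply exp_pos. apply pow_lt. lra. }
    assert (HV : (del <= V1 t)%R) by nra.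
    assert (G1 := exp_sq4_ge1 t). assert (G2 := exp_sq4_inv t).
    assert (R1e : R1 t = (exp ((t*t)/4) * V1 t)%R).
    { unfold V1. rewrite <- Rmult_assoc, (Rmult_comm (exp _)), G2. ring. }
    unfold du1. rewrite R1e. set (e := exp (t*t/4)) in *.
    assert (1 <= e * e)%R by nra. assert (V1 t <= (e * e) * V1 t)%R by nra.
    rewrite <- Rmult_assoc. lra. }
  set (yy := (x0 + (Cc + Rabs (u1 x0) + 1) / del)%R).
  assert (Hyy : (x0 <= yy)%R).
  { unfold yy. assert (0 <= (Cc + Rabs (u1 x0) + 1) / del)%R.
    { apply Rdiv_le_0_compat; [assert (H := Rabs_pos (u1 x0)); lra| lra]. }
    lra. }
  assert (Hgrow : (u1 x0 + del * (yy - x0) <= u1 yy)%R).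
  { assert (H := mono_inc (fun s => u1 s - del * s)%R (fun s => du1 s - del * 1)%R x0 yy Hyy).
    cut (u1 x0 - del * x0 <= u1 yy - del * yy)%R; [lra|]. apply H.
    - intros t Ht. apply (is_derive_minus u1 (fun s => del * s)%R t). apply Hu1.
      apply (is_derive_scal (fun s => s) t del 1). auto_derive; auto.
    - intros t Ht. specialize (ClB t ltac:(lra)). lra. }
  assert (E1 : (del * (yy - x0) = Cc + Rabs (u1 x0) + 1)%R) by (unfold yy; field; lra).
  rewrite E1 in Hgrow.
  assert (Hux := Rle_abs (- u1 x0)). rewrite Rabs_Ropp in Hux.
  assert (Hup : (u1 yy <= Cc)%R).
  { unfold u1. assert (H1 := re_le_Cmod (f yy)). apply abs_le_inv in H1.
    assert (H2 := Hb yy ltac:(lra)). assert (G := exp_pos ((yy*yy)/4)).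
    assert (G2 := exp_sq4_inv yy).
    assert (H3 := inv_pow_le1 yy beta ltac:(lra)).
    assert (exp (yy * yy / 4) * Re (f yy) <= exp (yy * yy / 4) * (Cc / yy ^ beta * exp (- (yy * yy) / 4)))%R
      by (apply Rmult_le_compat_l; lra).
    assert (exp (yy * yy / 4) * (Cc / yy ^ beta * exp (- (yy * yy) / 4)) = Cc * / yy ^ beta)%R.
    { replace (exp (yy * yy / 4) * (Cc / yy ^ beta * exp (- (yy * yy) / 4)))%R
        with (Cc / yy ^ beta * (exp (- (yy * yy) / 4) * exp (yy * yy / 4)))%R by ring.
      rewrite G2. unfold Rdiv. ring. }
    nra. }
  lra.
Qed.

Lemma one_sided_c (f f' : C -> C) (a c : C) (beta : nat) (Cc X : R) :
  (forall y, Cder f y (f' y)) -> (forall y, Cder f' y ((y*y/4 + a) * f y)) ->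
  (1 <= X)%R -> Cmod c = 1%R ->
  (forall x : R, (X <= x)%R -> (Cmod (f x) <= Cc / x^beta * exp(-(x*x)/4))%R) ->
  forall x : R, (X <= x)%R ->
   (exp(-(x*x)/4) * Re (c * (f' x + RtoC x / 2 * f x))
     <= Cmod (a + 1/2) * Cc * (exp(-(x*x)/2) / x^(S beta)))%R.
Proof.
  intros Hf Hf' HX Hc Hb x Hx.
  assert (H := one_sided (fun y => c * f y) (fun y => c * f' y) a beta Cc X).
  replace (c * (f' x + RtoC x / 2 * f x)) with (c * f' x + RtoC x / 2 * (c * f x)) by ring.
  apply H; auto.
  - intro y. eapply Cd_ext; [intro w; reflexivity| |].
    2:{ apply Cd_mult; [apply Cd_const| apply Hf]. }
    Ceq. ring.
  - intro y. eapply Cd_ext; [intro w; reflexivity| |].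
    2:{ apply Cd_mult; [apply Cd_const| apply Hf']. }
    Ceq. ring.
  - intros x' Hx'. rewrite Cmod_mult, Hc, Rmult_1_l. auto.
Qed.

Lemma Cmod_le_ReIm (z : C) : (Cmod z <= Rabs (Re z) + Rabs (Im z))%R.
Proof.
  assert (S := Cmod_sq z). assert (P := Cmod_ge_0 z).
  assert (A1 := Rabs_pos (Re z)). assert (A2 := Rabs_pos (Im z)).
  assert (E1 : (Rabs (Re z) * Rabs (Re z) = Re z * Re z)%R) by (rewrite <- Rabs_mult; apply Rabs_pos_eq; nra).
  assert (E2 : (Rabs (Im z) * Rabs (Im z) = Im z * Im z)%R) by (rewrite <- Rabs_mult; apply Rabs_pos_eq; nra).
  apply Rsqr_incr_0_var; [|lra]. unfold Rsqr. nra.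
Qed.

Lemma deriv_asym (f f' : C -> C) (a : C) (beta : nat) (Cc X : R) :
  (forall y, Cder f y (f' y)) -> (forall y, Cder f' y ((y*y/4 + a) * f y)) ->
  (1 <= X)%R ->
  (forall x : R, (X <= x)%R -> (Cmod (f x) <= Cc / x^beta * exp(-(x*x)/4))%R) ->
  forall x : R, (X <= x)%R ->
   (Cmod (f' x + RtoC x / 2 * f x)
     <= 2 * (Cmod (a + 1/2) * Cc) * (exp(-(x*x)/4) / x^(S beta)))%R.
Proof.
  intros Hf Hf' HX Hb x Hx.
  set (V := f' x + RtoC x / 2 * f x).
  set (B := (Cmod (a + 1/2) * Cc * (exp(-(x*x)/2) / x^(S beta)))%R).
  assert (Hc1 : Cmod 1 = 1%R) by apply Cmod_1.
  assert (Hcm : Cmod (- (1)) = 1%R) by apply Cmod_m1.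
  assert (Hci : Cmod Ci = 1%R).
  { unfold Cmod, Ci. simpl. replace (0 * (0 * 1) + 1 * (1 * 1))%R with 1%R by ring. apply sqrt_1. }
  assert (Hcmi : Cmod (- Ci) = 1%R) by (rewrite Cmod_opp; auto).
  assert (I1 := one_sided_c f f' a 1 beta Cc X Hf Hf' HX Hc1 Hb x Hx).
  assert (I2 := one_sided_c f f' a (- (1)) beta Cc X Hf Hf' HX Hcm Hb x Hx).
  assert (I3 := one_sided_c f f' a Ci beta Cc X Hf Hf' HX Hci Hb x Hx).
  assert (I4 := one_sided_c f f' a (- Ci) beta Cc X Hf Hf' HX Hcmi Hb x Hx).
  fold V B in I1, I2, I3, I4.
  assert (R1 : Re (1 * V) = Re V) by (destruct V; simpl; ring).
  assert (R2 : Re (- (1) * V) = (- Re V)%R) by (destruct V; simpl; ring).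
  assert (R3 : Re (Ci * V) = (- Im V)%R) by (destruct V; simpl; ring).
  assert (R4 : Re (- Ci * V) = Im V) by (destruct V; simpl; ring).
  rewrite R1 in I1. rewrite R2 in I2. rewrite R3 in I3. rewrite R4 in I4.
  set (e4 := exp (-(x*x)/4)) in *.
  assert (He4 : (0 < e4)%R) by apply exp_pos.
  assert (HB : (B = e4 * (Cmod (a + 1/2) * Cc * (e4 / x^(S beta))))%R).
  { unfold B, e4. rewrite <- exp_sq4. unfold Rdiv. ring. }
  set (B' := (Cmod (a + 1/2) * Cc * (e4 / x^(S beta)))%R) in *.
  rewrite HB in I1, I2, I3, I4.
  assert (Rabs (Re V) <= B')%R.
  { apply Rabs_le. split; apply (Rmult_le_reg_l e4); auto; nra. }
  assert (Rabs (Im V) <= B')%R.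
  { apply Rabs_le. split; apply (Rmult_le_reg_l e4); auto; nra. }
  assert (HH := Cmod_le_ReIm V).
  unfold B' in *. unfold Rdiv in *. lra.
Qed.

Lemma lim_get (g : R -> C) :
  filterlim g (Rbar_locally p_infty) (locally (RtoC 1)) ->
  forall eps : R, (0 < eps)%R -> exists M : R, forall x : R, (M < x)%R -> (Cmod (g x - 1) < eps)%R.
Proof.
  intros H eps Heps.
  assert (Hp : (0 < eps / 2)%R) by lra.
  assert (HL : locally (RtoC 1) (fun z : C => (Cmod (z - 1) < eps)%R)).
  { exists (mkposreal _ Hp). intros y Hy.
    assert (H2 := C_NormedModule_mixin_compat2 (RtoC 1) y (mkposreal _ Hp) Hy).
    simpl in H2. assert (sqrt 2 < 2)%R.
    { rewrite <- (sqrt_square 2) at 2 by lra. apply sqrt_lt_1; lra. }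
    assert (Cmod (y - 1) < sqrt 2 * (eps / 2))%R by exact H2.
    assert (0 < sqrt 2)%R by (apply sqrt_lt_R0; lra).
    nra. }
  destruct (H _ HL) as [M HM]. exists M. exact HM.
Qed.

Lemma lim_put (g : R -> C) :
  (forall eps : R, (0 < eps)%R -> exists M : R, forall x : R, (M < x)%R -> (Cmod (g x - 1) < eps)%R) ->
  filterlim g (Rbar_locally p_infty) (locally (RtoC 1)).
Proof.
  intros H P [eps HP].
  destruct (H eps (cond_pos eps)) as [M HM]. exists M. intros x Hx.
  apply HP. apply C_NormedModule_mixin_compat1. exact (HM x Hx).
Qed.

Lemma Cmod_cexp (z : C) : Cmod (cexp z) = exp (Re z).
Proof.
  unfold cexp, Cmod. simpl.
  assert (HH := sin2_cos2 (Im z)). unfold Rsqr in HH.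
  match goal with |- sqrt ?e = _ => replace e with (exp (Re z) ^ 2)%R end.
  - apply sqrt_pow2. left; apply exp_pos.
  - replace (exp (Re z) ^ 2)%R with (exp (Re z) ^2 * (sin (Im z) * sin (Im z) + cos (Im z) * cos (Im z)))%R
      by (rewrite HH; ring).
    ring.
Qed.

Lemma cexp_plus (z w : C) : cexp (z + w) = cexp z * cexp w.
Proof.
  unfold cexp. destruct z as [z1 z2]; destruct w as [w1 w2]. simpl.
  rewrite exp_plus, cos_plus, sin_plus.
  unfold Cmult. simpl. f_equal; ring.
Qed.

Lemma cexp_ln (x : R) : (0 < x)%R -> cexp (RtoC (ln x)) = RtoC x.
Proof.
  intros Hx. unfold cexp, RtoC. simpl. rewrite cos_0, sin_0, exp_ln by auto.
  f_equal; ring.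
Qed.

Lemma rpowC_succ (x : R) (s : C) : (0 < x)%R -> rpowC x (s + 1) = RtoC x * rpowC x s.
Proof.
  intros Hx. unfold rpowC.
  replace ((s + 1) * RtoC (ln x)) with (s * RtoC (ln x) + RtoC (ln x)) by ring.
  rewrite cexp_plus, cexp_ln by auto. ring.
Qed.

Lemma Cmod_rpowC (x : R) (s : C) : Cmod (rpowC x s) = exp (Re s * ln x).
Proof.
  unfold rpowC. rewrite Cmod_cexp. f_equal. destruct s; simpl. ring.
Qed.

Definition rr (a : C) (x : R) : C := rpowC x (- a - 1/2) * RtoC (exp (- (x * x) / 4)).

Lemma Cmod_rr (a : C) (x : R) :
  Cmod (rr a x) = (exp (Re (- a - 1/2) * ln x) * exp (- (x * x) / 4))%R.
Proof.
  unfold rr. rewrite Cmod_mult, Cmod_rpowC, Cmod_R. f_equal. apply Rabs_pos_eq. left; apply exp_pos.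
Qed.

Lemma rr_pos (a : C) (x : R) : (0 < Cmod (rr a x))%R.
Proof. rewrite Cmod_rr. apply Rmult_lt_0_compat; apply exp_pos. Qed.

Lemma asym_from_PCF (a : C) (f : C -> C) :
  is_PCF_U a f ->
  forall eps : R, (0 < eps)%R -> exists M : R, (1 <= M)%R /\ forall x : R, (M < x)%R ->
    (Cmod (f x - rr a x) <= eps * Cmod (rr a x))%R.
Proof.
  intros [f' [_ [_ Hlim]]] eps Heps.
  destruct (lim_get _ Hlim eps Heps) as [M HM].
  exists (Rmax 1 M). split; [apply Rmax_l|]. intros x Hx.
  assert (HxM : (M < x)%R) by (eapply Rle_lt_trans; [apply Rmax_r|exact Hx]).
  specialize (HM x HxM).
  assert (Hr := rr_pos a x).
  assert (Hr0 : rr a x <> 0) by (intro E; rewrite E, Cmod_0 in Hr; lra).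
  fold (rr a x) in HM.
  replace (f x - rr a x) with ((f x / rr a x - 1) * rr a x) by (field; auto).
  rewrite Cmod_mult. apply Rmult_le_compat_r; lra.
Qed.

Lemma Ceq_ReIm (a b : C) : Re a = Re b -> Im a = Im b -> a = b.
Proof. destruct a, b. simpl. intros -> ->. reflexivity. Qed.

Lemma const_real (W : C -> C) :
  (forall y, Cder W y (RtoC 0)) -> forall x0 x : R, W (RtoC x) = W (RtoC x0).
Proof.
  intros HW.
  assert (Hre : forall t, is_derive (fun s : R => Re (W (RtoC s))) t 0%R).
  { intro t. eapply Rd_ext; [intro s; reflexivity| |apply (real_deriv_Re W (fun _ => RtoC 0) t HW)].
    reflexivity. }
  assert (Him : forall t, is_derive (fun s : R => Im (W (RtoC s))) t 0%R).
  { intro t.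
    assert (H := line_deriv_Im W 0 1 t (RtoC 0)).
    replace (0 + RtoC t * 1) with (RtoC t) in H by ring.
    specialize (H (HW _)).
    eapply Rd_ext; [| |exact H].
    - intro s. simpl. f_equal. f_equal. ring.
    - simpl. ring. }
  assert (Key : forall (h : R -> R), (forall t, is_derive h t 0%R) -> forall a b, h a = h b).
  { intros h Hh a b.
    assert (forall a b, (a <= b)%R -> h a = h b).
    { intros a' b' Hab.
      assert (H1 := mono_dec h (fun _ => 0%R) a' b' Hab (fun t _ => Hh t) (fun t _ => Rle_refl 0)).
      assert (H2 := mono_inc h (fun _ => 0%R) a' b' Hab (fun t _ => Hh t) (fun t _ => Rle_refl 0)).
      lra. }
    destruct (Rle_dec a b); [auto|]. symmetry. apply H; lra. }
  intros x0 x. apply Ceq_ReIm.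
  - exact (Key _ Hre x x0).
  - exact (Key _ Him x x0).
Qed.

Lemma exp_ge_sq (t : R) : (0 <= t)%R -> (t * t / 4 <= exp t)%R.
Proof.
  intros Ht.
  assert (H : (1 + t / 2 <= exp (t / 2))%R).
  { destruct (Req_dec t 0) as [E|E].
    - subst. replace (0/2)%R with 0%R by field. rewrite exp_0. lra.
    - left. apply exp_ineq1. lra. }
  replace t with (t/2 + t/2)%R at 3 by field. rewrite exp_plus.
  assert (0 <= 1 + t/2)%R by lra. nra.
Qed.

Lemma xe2_bound (x : R) : (1 <= x)%R -> (x * (exp (-(x*x)/4) * exp (-(x*x)/4)) <= 16 / x)%R.
Proof.
  intros Hx. rewrite exp_sq4.
  assert (H := exp_ge_sq (x*x/2) ltac:(nra)).
  replace (- (x * x) / 2)%R with (- (x*x/2))%R by field. rewrite exp_Ropp.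
  set (E := exp (x * x / 2)) in *.
  assert (HE : (0 < E)%R) by apply exp_pos.
  assert (Hxx : (x * x <= 16 * E)%R).
  { assert (1 <= x * x)%R by nra.
    assert (x * x <= x * x * (x * x))%R by nra. nra. }
  replace (x * / E)%R with ((x * x) * / (x * E))%R by (field; lra).
  replace (16 / x)%R with ((16 * E) * / (x * E))%R by (field; lra).
  apply Rmult_le_compat_r; auto. left. apply Rinv_0_lt_compat. nra.
Qed.

Lemma Cmod_half (x : R) : (0 <= x)%R -> Cmod (RtoC x / 2) = (x / 2)%R.
Proof.
  intros Hx. rewrite Cmod_div. 2:{ intro E. injection E. lra. }
  rewrite Cmod_R, Rabs_pos_eq by auto.
  replace (2 : C) with (RtoC 2) by reflexivity. rewrite Cmod_R, Rabs_pos_eq by lra. reflexivity.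
Qed.

Lemma Cmod_q (x : R) (a : C) : (Cmod (RtoC x * RtoC x / 4 + a) <= x * x / 4 + Cmod a)%R.
Proof.
  eapply Rle_trans; [apply Cmod_triangle|].
  replace (RtoC x * RtoC x / 4) with (RtoC (x * x / 4)).
  2:{ apply Ceq_ReIm; simpl; field. }
  rewrite Cmod_R, Rabs_pos_eq; [lra|]. assert (0 <= x * x)%R by nra. lra.
Qed.

Lemma Cmod_prod_le (a b : C) (A B : R) : (Cmod a <= A)%R -> (Cmod b <= B)%R -> (Cmod (a * b) <= A * B)%R.
Proof.
  intros Ha Hb. rewrite Cmod_mult. apply Rmult_le_compat; auto; apply Cmod_ge_0.
Qed.

Lemma Cmod_sub (a b : C) : (Cmod (a - b) <= Cmod a + Cmod b)%R.
Proof. eapply Rle_trans; [apply Cmod_triangle|]. rewrite Cmod_opp. lra. Qed.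

Lemma W_real (x E u1 u2 p1 p2 d1 d2 f df w K1 K2 A : R) :
  (1 <= x)%R -> (0 < E)%R -> (0 <= u1)%R -> (0 <= u2)%R -> (0 <= p1)%R -> (0 <= p2)%R ->
  (0 <= d1)%R -> (0 <= d2)%R -> (0 <= f)%R -> (0 <= df)%R -> (0 <= K1)%R -> (0 <= K2)%R -> (0 <= A)%R ->
  (u1 <= 2 * (E / x))%R -> (u2 <= 2 * E)%R -> (p1 <= K1 * (E / x^2))%R -> (p2 <= K2 * (E / x^1))%R ->
  (d1 <= p1 + x/2*u1)%R -> (d2 <= p2 + x/2*u2)%R -> (f <= x/2*u1 + d1 + u2)%R ->
  (df <= u1/2 + x/2*d1 + (x*x/4 + A)*u1 + d2)%R -> (w <= f*d2 + df*u2)%R ->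
  (w <= ((K1+4)*(K2+1) + 2*(1 + (K1+1)/2 + 1/2 + 2*A + K2 + 1)) * (x * (E*E)))%R.
Proof.
  intros Hx HE Hu1 Hu2 Hp1 Hp2 Hd1 Hd2 Hf Hdf HK1 HK2 HA bu1 bu2 bp1 bp2 bd1 bd2 bf bdf bw.
  assert (Hx0 : (0 < x)%R) by lra.
  assert (Ex : (E / x <= E)%R).
  { unfold Rdiv. rewrite <- (Rmult_1_r E) at 2. apply Rmult_le_compat_l; [lra|].
    rewrite <- Rinv_1. apply Rinv_le_contravar; lra. }
  assert (Ex2 : (E / x^2 <= E)%R).
  { unfold Rdiv. rewrite <- (Rmult_1_r E) at 2. apply Rmult_le_compat_l; [lra|].
    rewrite <- Rinv_1. apply Rinv_le_contravar; [lra|]. simpl. nra. }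
  assert (Ex1 : (E / x^1 = E / x)%R) by (simpl; f_equal; ring).
  assert (c1 : (x / 2 * u1 <= E)%R).
  { assert (x / 2 * u1 <= x / 2 * (2 * (E / x)))%R by (apply Rmult_le_compat_l; lra).
    replace (x / 2 * (2 * (E / x)))%R with E in H by (field; lra). lra. }
  assert (c2 : (x * x / 4 * u1 <= x * E / 2)%R).
  { assert (x * x / 4 * u1 <= x * x / 4 * (2 * (E / x)))%R by (apply Rmult_le_compat_l; nra).
    replace (x * x / 4 * (2 * (E / x)))%R with (x * E / 2)%R in H by (field; lra). lra. }
  assert (c3 : (u1 <= 2 * E)%R) by lra.
  assert (bp1' : (p1 <= K1 * E)%R) by (eapply Rle_trans; [exact bp1|]; apply Rmult_le_compat_l; lra).
  assert (bp2' : (p2 <= K2 * E)%R).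
  { eapply Rle_trans; [exact bp2|]; rewrite Ex1. apply Rmult_le_compat_l; lra. }
  assert (bd1' : (d1 <= (K1 + 1) * E)%R) by lra.
  assert (bd2' : (d2 <= (K2 + 1) * x * E)%R).
  { assert (x / 2 * u2 <= x * E)%R.
    { assert (x / 2 * u2 <= x / 2 * (2 * E))%R by (apply Rmult_le_compat_l; lra). lra. }
    assert (K2 * E <= K2 * x * E)%R.
    { rewrite Rmult_assoc. apply Rmult_le_compat_l; [lra|]. nra. }
    lra. }
  assert (bf' : (f <= (K1 + 4) * E)%R) by lra.
  set (KD := (1 + (K1+1)/2 + 1/2 + 2*A + K2 + 1)%R).
  assert (bdf' : (df <= KD * x * E)%R).
  { assert (T1 : (u1 / 2 <= x * E)%R) by nra.
    assert (T2 : (x / 2 * d1 <= (K1 + 1) / 2 * x * E)%R).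
    { assert (x / 2 * d1 <= x / 2 * ((K1 + 1) * E))%R by (apply Rmult_le_compat_l; lra). lra. }
    assert (T3 : (A * u1 <= 2 * A * x * E)%R).
    { assert (A * u1 <= A * (2 * E))%R by (apply Rmult_le_compat_l; lra).
      assert (2 * A * E <= 2 * A * x * E)%R.
      { assert (0 <= A * E)%R by nra. nra. }
      lra. }
    assert (T4 : (x * E / 2 = 1/2 * x * E)%R) by field.
    unfold KD. nra. }
  assert (HKD : (0 <= KD)%R) by (unfold KD; lra).
  assert (P1 : (f * d2 <= (K1 + 4) * E * ((K2 + 1) * x * E))%R) by (apply Rmult_le_compat; lra).
  assert (P2 : (df * u2 <= KD * x * E * (2 * E))%R).
  { apply Rmult_le_compat; auto. }
  assert (E1 : ((K1 + 4) * E * ((K2 + 1) * x * E) + KD * x * E * (2 * E)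
            = ((K1+4)*(K2+1) + 2*KD) * (x * (E*E)))%R) by ring.
  fold KD. lra.
Qed.

Lemma le_all_eps (a : R) : (forall eps, (0 < eps)%R -> (a <= eps)%R) -> (a <= 0)%R.
Proof.
  intros H. destruct (Rle_dec a 0); auto.
  specialize (H (a/2)%R ltac:(lra)). lra.
Qed.

Lemma Cmod_small_0 (z : C) : (forall eps, (0 < eps)%R -> (Cmod z <= eps)%R) -> z = 0.
Proof.
  intros H. apply Cmod_eq_0. assert (H1 := le_all_eps _ H). assert (H2 := Cmod_ge_0 z). lra.
Qed.

Lemma U_relation (a1 a2 : C) (U1 U2 D1 D2 : C -> C) :
  a2 = a1 - 1 ->
  Re (- a1 - 1/2) = (-1)%R ->
  (forall y, Cder U1 y (D1 y)) -> (forall y, Cder D1 y ((y*y/4 + a1) * U1 y)) ->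
  (forall y, Cder U2 y (D2 y)) -> (forall y, Cder D2 y ((y*y/4 + a2) * U2 y)) ->
  is_PCF_U a1 U1 -> is_PCF_U a2 U2 ->
  forall y, U2 y = y/2 * U1 y - D1 y.
Proof.
  intros Ha HRe HU1 HD1 HU2 HD2 P1 P2.
  set (e := fun x : R => exp (- (x * x) / 4)).
  assert (He : forall x, (0 < e x)%R) by (intro; apply exp_pos).
  assert (Hrr : forall x : R, (0 < x)%R -> rr a2 x = RtoC x * rr a1 x).
  { intros x Hx. unfold rr. replace (- a2 - 1/2) with ((- a1 - 1/2) + 1) by (rewrite Ha; field).
    rewrite rpowC_succ by auto. ring. }
  assert (Hr1 : forall x : R, (0 < x)%R -> Cmod (rr a1 x) = (e x / x)%R).
  { intros x Hx. rewrite Cmod_rr, HRe. unfold e.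
    replace (-1 * ln x)%R with (- ln x)%R by ring. rewrite exp_Ropp, exp_ln by auto.
    unfold Rdiv. ring. }
  assert (Hr2 : forall x : R, (0 < x)%R -> Cmod (rr a2 x) = e x).
  { intros x Hx. rewrite Hrr, Cmod_mult, Cmod_R, Rabs_pos_eq, Hr1 by lra. field. lra. }
  destruct (asym_from_PCF a1 U1 P1 1 Rlt_0_1) as [M1 [HM1 HA1]].
  destruct (asym_from_PCF a2 U2 P2 1 Rlt_0_1) as [M2 [HM2 HA2]].
  assert (BU1 : forall x : R, (M1 + 1 <= x)%R -> (Cmod (U1 x) <= 2 / x^1 * e x)%R).
  { intros x Hx. specialize (HA1 x ltac:(lra)). rewrite Hr1 in HA1 by lra.
    replace (U1 x) with ((U1 x - rr a1 x) + rr a1 x) by ring.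
    replace (2 / x^1 * e x)%R with (2 * (e x / x))%R by (simpl; field; lra).
    eapply Rle_trans; [apply Cmod_triangle|]. rewrite Hr1 by lra. lra. }
  assert (BU2 : forall x : R, (M2 + 1 <= x)%R -> (Cmod (U2 x) <= 2 / x^0 * e x)%R).
  { intros x Hx. specialize (HA2 x ltac:(lra)). rewrite Hr2 in HA2 by lra.
    replace (U2 x) with ((U2 x - rr a2 x) + rr a2 x) by ring.
    replace (2 / x^0 * e x)%R with (2 * e x)%R by (simpl; field; lra).
    eapply Rle_trans; [apply Cmod_triangle|]. rewrite Hr2 by lra. lra. }
  assert (BP1 := deriv_asym U1 D1 a1 1 2 (M1 + 1) HU1 HD1 ltac:(lra) BU1).
  assert (BP2 := deriv_asym U2 D2 a2 0 2 (M2 + 1) HU2 HD2 ltac:(lra) BU2).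
  set (K1 := (2 * (Cmod (a1 + 1 / 2) * 2))%R) in BP1.
  set (K2 := (2 * (Cmod (a2 + 1 / 2) * 2))%R) in BP2.
  assert (HK1 : (0 <= K1)%R) by (unfold K1; assert (H := Cmod_ge_0 (a1 + 1/2)); lra).
  assert (HK2 : (0 <= K2)%R) by (unfold K2; assert (H := Cmod_ge_0 (a2 + 1/2)); lra).
  set (F := fun y : C => y / 2 * U1 y - D1 y - U2 y).
  set (DF := fun y : C => U1 y / 2 + y / 2 * D1 y - (y * y / 4 + a1) * U1 y - D2 y).
  set (W := fun y : C => F y * D2 y - DF y * U2 y).
  assert (Hhalf : forall y, Cder (fun w : C => w / 2) y (1 / 2)).
  { intro y. eapply Cd_ext; [intro w; reflexivity| |].
    2:{ apply Cd_mult; [apply Cd_id|apply Cd_const]. }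
    Ceq. field. }
  assert (Hq : forall b y, Cder (fun w : C => w * w / 4 + b) y (y / 2)).
  { intros b y. eapply Cd_ext; [intro w; reflexivity| |].
    2:{ apply Cd_plus; [|apply Cd_const]. apply Cd_mult; [|apply Cd_const].
        apply Cd_mult; apply Cd_id. }
    Ceq. field. }
  assert (HF : forall y, Cder F y (DF y)).
  { intro y. eapply Cd_ext; [intro w; reflexivity| |].
    2:{ apply Cd_minus; [apply Cd_minus|apply HU2]; [apply Cd_mult; [apply Hhalf|apply HU1]|apply HD1]. }
    unfold DF. Ceq. field. }
  assert (HDF : forall y, Cder DF y ((y * y / 4 + a2) * F y)).
  { intro y. eapply Cd_ext; [intro w; reflexivity| |].
    2:{ apply Cd_minus; [apply Cd_minus|apply HD2].
        - apply Cd_plus.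
          + eapply Cd_ext; [intro w; reflexivity| |].
            2:{ apply Cd_mult; [apply HU1|apply Cd_const]. } reflexivity.
          + apply Cd_mult; [apply Hhalf|apply HD1].
        - apply Cd_mult; [apply Hq|apply HU1]. }
    unfold F. rewrite Ha. Ceq. field. }
  assert (HW : forall y, Cder W y (RtoC 0)).
  { intro y. eapply Cd_ext; [intro w; reflexivity| |].
    2:{ apply Cd_minus; apply Cd_mult; [apply HF|apply HD2|apply HDF|apply HU2]. }
    Ceq. ring. }
  set (X0 := Rmax (M1 + 1) (M2 + 1)).
  assert (HX0 : (1 <= X0)%R) by (unfold X0; eapply Rle_trans; [|apply Rmax_l]; lra).
  set (Kw := ((K1+4)*(K2+1) + 2*(1 + (K1+1)/2 + 1/2 + 2*Cmod a1 + K2 + 1))%R).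
  assert (Cmod2 : Cmod 2 = 2%R).
  { replace (2 : C) with (RtoC 2) by reflexivity. rewrite Cmod_R, Rabs_pos_eq; lra. }
  assert (BW : forall x : R, (X0 <= x)%R -> (Cmod (W x) <= Kw * (16 / x))%R).
  { intros x Hx.
    assert (Hx1 : (M1 + 1 <= x)%R) by (eapply Rle_trans; [apply Rmax_l|exact Hx]).
    assert (Hx2 : (M2 + 1 <= x)%R) by (eapply Rle_trans; [apply Rmax_r|exact Hx]).
    assert (Hxp : (1 <= x)%R) by lra.
    assert (hu1 : (Cmod (U1 x) <= 2 * (e x / x))%R).
    { eapply Rle_trans; [apply BU1; auto|]. simpl. right. field. lra. }
    assert (hu2 : (Cmod (U2 x) <= 2 * e x)%R).
    { eapply Rle_trans; [apply BU2; auto|]. simpl. right. field. }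
    assert (hp1 : (Cmod (D1 x + RtoC x / 2 * U1 x) <= K1 * (e x / x^2))%R) by exact (BP1 x Hx1).
    assert (hp2 : (Cmod (D2 x + RtoC x / 2 * U2 x) <= K2 * (e x / x^1))%R) by exact (BP2 x Hx2).
    assert (Hh : Cmod (RtoC x / 2) = (x / 2)%R) by (apply Cmod_half; lra).
    assert (hd1 : (Cmod (D1 x) <= Cmod (D1 x + RtoC x / 2 * U1 x) + x / 2 * Cmod (U1 x))%R).
    { replace (D1 x) with ((D1 x + RtoC x / 2 * U1 x) - RtoC x / 2 * U1 x) at 1 by ring.
      eapply Rle_trans; [apply Cmod_sub|]. rewrite Cmod_mult, Hh. lra. }
    assert (hd2 : (Cmod (D2 x) <= Cmod (D2 x + RtoC x / 2 * U2 x) + x / 2 * Cmod (U2 x))%R).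
    { replace (D2 x) with ((D2 x + RtoC x / 2 * U2 x) - RtoC x / 2 * U2 x) at 1 by ring.
      eapply Rle_trans; [apply Cmod_sub|]. rewrite Cmod_mult, Hh. lra. }
    assert (hf : (Cmod (F x) <= x / 2 * Cmod (U1 x) + Cmod (D1 x) + Cmod (U2 x))%R).
    { unfold F. eapply Rle_trans; [apply Cmod_sub|].
      assert (H := Cmod_sub (RtoC x / 2 * U1 x) (D1 x)). rewrite Cmod_mult, Hh in H. lra. }
    assert (hdf : (Cmod (DF x) <= Cmod (U1 x) / 2 + x / 2 * Cmod (D1 x)
                     + (x * x / 4 + Cmod a1) * Cmod (U1 x) + Cmod (D2 x))%R).
    { unfold DF. eapply Rle_trans; [apply Cmod_sub|].
      eapply Rle_trans; [apply Rplus_le_compat_r; apply Cmod_sub|].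
      eapply Rle_trans; [apply Rplus_le_compat_r; apply Rplus_le_compat_r; apply Cmod_triangle|].
      rewrite Cmod_div, Cmod2 by (intro E; injection E; lra).
      rewrite (Cmod_mult (RtoC x / 2)), Hh.
      assert (H := Cmod_prod_le _ _ _ _ (Cmod_q x a1) (Rle_refl (Cmod (U1 x)))).
      lra. }
    assert (hw : (Cmod (W x) <= Cmod (F x) * Cmod (D2 x) + Cmod (DF x) * Cmod (U2 x))%R).
    { unfold W. eapply Rle_trans; [apply Cmod_sub|]. rewrite !Cmod_mult. lra. }
    assert (HWr := W_real x (e x) _ _ _ _ _ _ _ _ _ K1 K2 (Cmod a1) Hxp (He x)
      (Cmod_ge_0 _) (Cmod_ge_0 _) (Cmod_ge_0 _) (Cmod_ge_0 _) (Cmod_ge_0 _) (Cmod_ge_0 _)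
      (Cmod_ge_0 _) (Cmod_ge_0 _) HK1 HK2 (Cmod_ge_0 _) hu1 hu2 hp1 hp2 hd1 hd2 hf hdf hw).
    fold Kw in HWr.
    assert (Hxe := xe2_bound x Hxp).
    assert (HKw : (0 <= Kw)%R).
    { unfold Kw. assert (H := Cmod_ge_0 a1). assert (0 <= (K1 + 4) * (K2 + 1))%R by nra. lra. }
    assert (Kw * (x * (e x * e x)) <= Kw * (16 / x))%R by (apply Rmult_le_compat_l; auto).
    lra. }
  destruct (asym_from_PCF a2 U2 P2 (1/2) ltac:(lra)) as [M3 [HM3 HA3]].
  set (x0 := Rmax X0 (M3 + 1)).
  assert (Hx0X : (X0 <= x0)%R) by apply Rmax_l.
  assert (Hx0M : (M3 < x0)%R) by (eapply Rlt_le_trans; [|apply Rmax_r]; lra).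
  assert (Hx0p : (0 < x0)%R) by lra.
  assert (HU2low : forall x : R, (0 < x)%R -> (Cmod (U2 x - rr a2 x) <= 1/2 * Cmod (rr a2 x))%R ->
             (e x / 2 <= Cmod (U2 x))%R).
  { intros x Hx H. rewrite Hr2 in H by auto.
    assert (H' := Cmod_rev (rr a2 x) (U2 x)). rewrite Hr2 in H' by auto.
    rewrite Cmod_sub_sym in H. lra. }
  assert (HU20 : U2 x0 <> 0).
  { intro E. assert (H := HU2low x0 Hx0p (HA3 x0 Hx0M)). rewrite E, Cmod_0 in H.
    specialize (He x0). lra. }
  assert (HW0 : W x0 = 0).
  { apply Cmod_small_0. intros eps Heps.
    set (x := Rmax x0 (16 * Kw / eps + 1)).
    assert (Hx : (x0 <= x)%R) by apply Rmax_l.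
    assert (Hx' : (16 * Kw / eps + 1 <= x)%R) by apply Rmax_r.
    rewrite <- (const_real W HW x0 x).
    assert (H := BW x ltac:(lra)).
    assert (HKw : (0 <= Kw)%R).
    { unfold Kw. assert (H1 := Cmod_ge_0 a1). assert (0 <= (K1 + 4) * (K2 + 1))%R by nra. lra. }
    assert (Hxp : (0 < x)%R) by lra.
    assert (16 * Kw / eps <= x)%R by lra.
    assert (16 * Kw <= eps * x)%R.
    { apply (Rmult_le_compat_r eps) in H0; [|lra]. unfold Rdiv in H0.
      rewrite Rmult_assoc, Rinv_l, Rmult_1_r in H0 by lra. lra. }
    assert (Kw * (16 / x) <= eps)%R.
    { replace (Kw * (16 / x))%R with ((16 * Kw) * / x)%R by (field; lra).
      apply (Rmult_le_reg_r x); auto. rewrite Rmult_assoc, Rinv_l by lra. lra. }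
    lra. }
  set (lam := F x0 / U2 x0).
  set (g := fun y : C => F y - lam * U2 y).
  set (G := fun y : C => DF y - lam * D2 y).
  assert (Hg : forall y, Cder g y (G y)).
  { intro y. eapply Cd_ext; [intro w; reflexivity| |].
    2:{ apply Cd_minus; [apply HF|]. apply Cd_mult; [apply Cd_const|apply HU2]. }
    unfold G. Ceq. ring. }
  assert (HG : forall y, Cder G y ((y * y / 4 + a2) * g y)).
  { intro y. eapply Cd_ext; [intro w; reflexivity| |].
    2:{ apply Cd_minus; [apply HDF|]. apply Cd_mult; [apply Cd_const|apply HD2]. }
    unfold g. Ceq. ring. }
  assert (Hg0 : g x0 = 0) by (unfold g, lam; field; auto).
  assert (HG0 : G x0 = 0).
  { unfold G, lam. unfold W in HW0.
    replace (DF x0 - F x0 / U2 x0 * D2 x0) with (- (F x0 * D2 x0 - DF x0 * U2 x0) / U2 x0) by (field; auto).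
    rewrite HW0. field. auto. }
  assert (Hgz := ode_unique g G (fun y => y * y / 4 + a2) x0 (fun r => r * r / 4 + Cmod a2)%R Hg HG).
  assert (Hgz' : forall y, g y = 0).
  { apply Hgz; auto. intros r y Hy. eapply Rle_trans; [apply Cmod_triangle|].
    rewrite Cmod_div, Cmod_mult by (intro E; injection E; lra).
    replace (4 : C) with (RtoC 4) by reflexivity. rewrite Cmod_R, Rabs_pos_eq by lra.
    assert (0 <= Cmod y)%R by apply Cmod_ge_0.
    assert (Cmod y * Cmod y <= r * r)%R by nra. lra. }
  assert (Hlam : lam = 0).
  { apply Cmod_small_0. intros eps Heps.
    set (ep := Rmin (1/2) (eps/8)).
    assert (Hep : (0 < ep)%R) by (apply Rmin_pos; lra).
    assert (Hep1 : (ep <= 1/2)%R) by apply Rmin_l.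
    assert (Hep2 : (ep <= eps/8)%R) by apply Rmin_r.
    destruct (asym_from_PCF a1 U1 P1 ep Hep) as [M4 [HM4 HA4]].
    destruct (asym_from_PCF a2 U2 P2 ep Hep) as [M5 [HM5 HA5]].
    set (x := Rmax (Rmax X0 (M4 + 1)) (Rmax (M5 + 1) (8 * K1 / eps + 1))).
    assert (Hx1 : (X0 <= x)%R) by (unfold x; eapply Rle_trans; [apply Rmax_l|apply Rmax_l]).
    assert (Hx2 : (M4 + 1 <= x)%R) by (unfold x; eapply Rle_trans; [apply Rmax_r|apply Rmax_l]).
    assert (Hx3 : (M5 + 1 <= x)%R) by (unfold x; eapply Rle_trans; [apply Rmax_l|apply Rmax_r]).
    assert (Hx4 : (8 * K1 / eps + 1 <= x)%R) by (unfold x; eapply Rle_trans; [apply Rmax_r|apply Rmax_r]).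
    assert (HxM1 : (M1 + 1 <= x)%R) by (eapply Rle_trans; [apply Rmax_l|exact Hx1]).
    assert (Hxp : (1 <= x)%R) by lra.
    assert (HFx : F x = RtoC x * (U1 x - rr a1 x) - (U2 x - rr a2 x) - (D1 x + RtoC x / 2 * U1 x)).
    { rewrite Hrr by lra. unfold F. field. }
    assert (b1 : (Cmod (RtoC x * (U1 x - rr a1 x)) <= ep * e x)%R).
    { rewrite Cmod_mult, Cmod_R, Rabs_pos_eq by lra.
      assert (H := HA4 x ltac:(lra)). rewrite Hr1 in H by lra.
      assert (x * Cmod (U1 x - rr a1 x) <= x * (ep * (e x / x)))%R by (apply Rmult_le_compat_l; lra).
      replace (x * (ep * (e x / x)))%R with (ep * e x)%R in H0 by (field; lra). lra. }
    assert (b2 : (Cmod (U2 x - rr a2 x) <= ep * e x)%R).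
    { assert (H := HA5 x ltac:(lra)). rewrite Hr2 in H by lra. exact H. }
    assert (b3 : (Cmod (D1 x + RtoC x / 2 * U1 x) <= K1 * e x / x)%R).
    { eapply Rle_trans; [exact (BP1 x HxM1)|].
      unfold Rdiv. rewrite Rmult_assoc. apply Rmult_le_compat_l; auto.
      apply Rmult_le_compat_l; [left; apply He|]. apply Rinv_le_contravar; [lra|]. simpl. nra. }
    assert (bF : (Cmod (F x) <= (2 * ep + K1 / x) * e x)%R).
    { rewrite HFx. eapply Rle_trans; [apply Cmod_sub|].
      eapply Rle_trans; [apply Rplus_le_compat_r; apply Cmod_sub|].
      replace ((2 * ep + K1 / x) * e x)%R with (ep * e x + ep * e x + K1 * e x / x)%R by (field; lra).
      lra. }
    assert (bU : (e x / 2 <= Cmod (U2 x))%R).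
    { apply HU2low; [lra|]. eapply Rle_trans; [apply (HA5 x ltac:(lra))|].
      apply Rmult_le_compat_r; [apply Cmod_ge_0|lra]. }
    assert (HU2x : U2 x <> 0).
    { intro E. rewrite E, Cmod_0 in bU. specialize (He x). lra. }
    assert (Hlx : lam = F x / U2 x).
    { assert (H := Hgz' x). unfold g in H. field_simplify_eq; auto.
      apply (f_equal (fun z => z + lam * U2 x)) in H. ring_simplify in H. rewrite H. ring. }
    rewrite Hlx, Cmod_div by auto.
    specialize (He x).
    assert (H8 : (8 * K1 / eps <= x)%R) by lra.
    assert (HK1x : (K1 / x <= eps / 8)%R).
    { apply (Rmult_le_compat_r eps) in H8; [|lra]. unfold Rdiv in *.
      rewrite Rmult_assoc, Rinv_l, Rmult_1_r in H8 by lra.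
      apply (Rmult_le_reg_r x); [lra|]. rewrite Rmult_assoc, Rinv_l by lra.
      apply (Rmult_le_reg_r 8); [lra|]. 
      replace (eps * / 8 * x * 8)%R with (eps * x)%R by field. lra. }
    apply Rle_div_l; [lra|].
    assert ((2 * ep + K1 / x) * e x <= eps * (e x / 2))%R.
    { replace (eps * (e x / 2))%R with (eps / 2 * e x)%R by field.
      apply Rmult_le_compat_r; lra. }
    assert (eps * (e x / 2) <= eps * Cmod (U2 x))%R by (apply Rmult_le_compat_l; lra).
    lra. }
  intro y. assert (H := Hgz' y). unfold g, F in H. rewrite Hlam in H.
  apply (f_equal (fun z => - z + y / 2 * U1 y - D1 y)) in H. ring_simplify in H.
  rewrite <- H. ring.
Qed.

Lemma Ci2 : Ci ^ 2 = - (1). Proof. apply injective_projections; simpl; ring. Qed.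
Lemma Ci3 : Ci ^ 3 = - Ci. Proof. apply injective_projections; simpl; ring. Qed.
Lemma Ci4 : Ci ^ 4 = 1. Proof. apply injective_projections; simpl; ring. Qed.
Lemma Ci_neq0 : Ci <> 0. Proof. intro E. injection E. lra. Qed.

Lemma riccati_alg (xi u d S m : C) :
  S * S = 2 * m -> m <> 0 -> S <> 0 -> (Ci * xi / S) / 2 * u - d <> 0 ->
  / (2 * S) * ((Ci / S * d) * / ((Ci * xi / S) / 2 * u - d)
     + u * (- (Ci / S * (u / 2 + (Ci * xi / S) / 2 * d
                          - ((Ci * xi / S) * (Ci * xi / S) / 4 + (1/2 - Ci / (4 * m))) * u))
            / (((Ci * xi / S) / 2 * u - d) * ((Ci * xi / S) / 2 * u - d))))
  = ((/ (2 * S) * (u / ((Ci * xi / S) / 2 * u - d))) * (/ (2 * S) * (u / ((Ci * xi / S) / 2 * u - d)))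
     - xi * (/ (2 * S) * (u / ((Ci * xi / S) / 2 * u - d))) - Ci / 2) / (2 * m).
Proof.
  intros HS Hm HS0 Hu2.
  assert (Hn : Ci * xi * u - d * (S * 2) <> 0).
  { intro E. apply Hu2.
    replace (Ci * xi / S / 2 * u - d) with ((Ci * xi * u - d * (S * 2)) / (2 * S)) by (field; auto).
    rewrite E. field. auto. }
  replace m with (S * S / 2) in * by (rewrite HS; field).
  field_simplify_eq.
  - rewrite ?Ci2, ?Ci3, ?Ci4. ring.
  - split; auto.
Qed.

Theorem mainTheorem1 (mu : R) (U1 U2 : C -> C) :
  (0 < mu)%R ->
  is_PCF_U (1/2 - Ci / (4 * RtoC mu)) U1 ->
  is_PCF_U (- (1/2) - Ci / (4 * RtoC mu)) U2 ->
  (exists dPhi : C -> C,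
     forall xi : C, Phi0_den mu U2 xi <> 0 ->
       is_derive (Phi0 mu U1 U2) xi (dPhi xi) /\
       Phi0 mu U1 U2 xi * Phi0 mu U1 U2 xi - xi * Phi0 mu U1 U2 xi
         = 2 * RtoC mu * dPhi xi + Ci / 2 /\
       (exists d2 : C, is_derive dPhi xi d2 /\
          - (1/2) * Phi0 mu U1 U2 xi - (1/2) * xi * dPhi xi
            + Phi0 mu U1 U2 xi * dPhi xi = RtoC mu * d2)) /\
  filterlim
    (fun t : R => Phi0 mu U1 U2 (- (Ci * RtoC t)) / (- Ci / (2 * (- (Ci * RtoC t)))))
    (Rbar_locally p_infty) (locally (RtoC 1)).
Proof.
  intros Hmu P1 P2.
  set (a1 := 1/2 - Ci / (4 * RtoC mu)) in *.
  set (a2 := - (1/2) - Ci / (4 * RtoC mu)) in *.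
  assert (Hmu0 : RtoC mu <> 0) by (intro E; injection E; lra).
  assert (Ha : a2 = a1 - 1) by (unfold a1, a2; field; auto).
  assert (HRe : Re (- a1 - 1/2) = (-1)%R).
  { unfold a1. simpl. field. lra. }
  destruct P1 as [D1 [HU1 [HD1 L1]]] eqn:EP1.
  destruct P2 as [D2 [HU2 [HD2 L2]]] eqn:EP2.
  assert (Rel1 := U_relation a1 a2 U1 U2 D1 D2 Ha HRe HU1 HD1 HU2 HD2 P1 P2).
  assert (Hhalf : forall y, Cder (fun w : C => w / 2) y (1 / 2)).
  { intro y. eapply Cd_ext; [intro w; reflexivity| |].
    2:{ apply Cd_mult; [apply Cd_id|apply Cd_const]. }
    Ceq. field. }
  assert (Rel2 : forall y, D2 y = U1 y / 2 + y / 2 * D1 y - (y * y / 4 + a1) * U1 y).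
  { intro y.
    assert (H : Cder U2 y (1 / 2 * U1 y + y / 2 * D1 y - (y * y / 4 + a1) * U1 y)).
    { eapply Cd_ext; [intro w; symmetry; apply Rel1| |].
      2:{ apply Cd_minus; [apply Cd_mult; [apply Hhalf|apply HU1]|apply HD1]. }
      Ceq. field. }
    assert (E1 := is_C_derive_unique U2 y _ H).
    assert (E2 := is_C_derive_unique U2 y _ (HU2 y)).
    rewrite E2 in E1. rewrite E1. field. }
  set (S := RtoC (sqrt (2 * mu))).
  assert (Hsq : (0 < sqrt (2 * mu))%R) by (apply sqrt_lt_R0; lra).
  assert (HS0 : S <> 0) by (intro E; injection E; lra).
  assert (HS : S * S = 2 * RtoC mu).
  { unfold S. assert (H := sqrt_sqrt (2 * mu) ltac:(lra)). apply Ceq_ReIm; simpl; lra. }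
  set (Phi := Phi0 mu U1 U2).
  set (dPhi := fun xi : C => (Phi xi * Phi xi - xi * Phi xi - Ci / 2) / (2 * RtoC mu)).
  split.
  { exists dPhi. intros xi Hden.
    unfold Phi0_den in Hden. fold S in Hden.
    assert (HD : Cder Phi xi (dPhi xi)).
    { set (sf := fun w : C => Ci * w / S).
      assert (Hs : forall w, Cder sf w (Ci / S)).
      { intro w. eapply Cd_ext; [intro v; reflexivity| |].
        2:{ apply Cd_mult; [apply Cd_mult; [apply Cd_const|apply Cd_id]|apply Cd_const]. }
        Ceq. field. auto. }
      eapply Cd_ext; [intro w; reflexivity| |].
      2:{ apply Cd_mult; [apply Cd_const|].
          apply Cd_mult.
          - apply (Cd_comp U1 sf xi (D1 (sf xi)) (Ci / S)); [apply HU1|apply Hs].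
          - apply is_derive_Cinv; [|exact Hden].
            apply (Cd_comp U2 sf xi (D2 (sf xi)) (Ci / S)); [apply HU2|apply Hs]. }
      unfold dPhi, Phi, Phi0. fold S. fold (sf xi).
      rewrite Rel2. rewrite Rel1 in Hden |- *. unfold sf in *. unfold a1.
      Ceq. 
      rewrite <- (riccati_alg xi (U1 (Ci * xi / S)) (D1 (Ci * xi / S)) S (RtoC mu) HS Hmu0 HS0 Hden).
      ring. }
    split; [exact HD|]. split.
    { unfold dPhi. field. auto. }
    set (p := Phi xi). set (p' := dPhi xi).
    exists (((p' * p + p * p') - (1 * p + xi * p') - 0) * / (2 * RtoC mu) + (p * p - xi * p - Ci / 2) * 0).
    split.
    - unfold dPhi at 1. 
      eapply Cd_ext; [intro w; reflexivity| |].
      2:{ apply Cd_mult; [|apply Cd_const].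
          apply Cd_minus; [apply Cd_minus|apply Cd_const].
          - apply Cd_mult; exact HD.
          - apply Cd_mult; [apply Cd_id|exact HD]. }
      reflexivity.
    - Ceq. field. auto. }
  apply lim_put. intros eps Heps.
  set (ep := Rmin (1/2) (eps/8)).
  assert (Hep : (0 < ep)%R) by (apply Rmin_pos; lra).
  assert (Hep1 : (ep <= 1/2)%R) by apply Rmin_l.
  assert (Hep2 : (ep <= eps/8)%R) by apply Rmin_r.
  destruct (asym_from_PCF a1 U1 P1 ep Hep) as [M1 [HM1 HA1]].
  destruct (asym_from_PCF a2 U2 P2 ep Hep) as [M2 [HM2 HA2]].
  set (sq := sqrt (2 * mu)) in *.
  exists (Rmax M1 M2 * sq)%R. intros t Ht.
  set (y := (t / sq)%R).
  assert (HM : (1 <= Rmax M1 M2)%R) by (eapply Rle_trans; [exact HM1|apply Rmax_l]).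
  assert (Hy : (Rmax M1 M2 < y)%R).
  { unfold y. apply (Rmult_lt_reg_r sq); auto. unfold Rdiv. rewrite Rmult_assoc, Rinv_l, Rmult_1_r by lra. lra. }
  assert (Hy1 : (M1 < y)%R) by (eapply Rle_lt_trans; [apply Rmax_l|exact Hy]).
  assert (Hy2 : (M2 < y)%R) by (eapply Rle_lt_trans; [apply Rmax_r|exact Hy]).
  assert (Hyp : (0 < y)%R) by lra.
  assert (Ht0 : (0 < t)%R).
  { assert (0 < Rmax M1 M2 * sq)%R by (apply Rmult_lt_0_compat; lra). lra. }
  assert (Harg : Ci * (- (Ci * RtoC t)) / S = RtoC y).
  { unfold S, y. fold sq. apply Ceq_ReIm; simpl; field; lra. }
  assert (Hyt : RtoC y = RtoC t / S).
  { unfold S, y. fold sq. apply Ceq_ReIm; simpl; field; lra. }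
  assert (Hrr : rr a2 y = RtoC y * rr a1 y).
  { unfold rr. replace (- a2 - 1/2) with ((- a1 - 1/2) + 1) by (rewrite Ha; field).
    rewrite rpowC_succ by auto. ring. }
  specialize (HA1 y Hy1). specialize (HA2 y Hy2).
  assert (Hr1 := rr_pos a1 y). assert (Hr2 := rr_pos a2 y).
  assert (Hr10 : rr a1 y <> 0) by (intro E; rewrite E, Cmod_0 in Hr1; lra).
  assert (Hr20 : rr a2 y <> 0) by (intro E; rewrite E, Cmod_0 in Hr2; lra).
  set (A := U1 y / rr a1 y). set (B := U2 y / rr a2 y).
  assert (HA : (Cmod (A - 1) <= ep)%R).
  { unfold A. replace (U1 y / rr a1 y - 1) with ((U1 y - rr a1 y) / rr a1 y) by (field; auto).
    rewrite Cmod_div by auto. apply Rle_div_l; auto. }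
  assert (HB : (Cmod (B - 1) <= ep)%R).
  { unfold B. replace (U2 y / rr a2 y - 1) with ((U2 y - rr a2 y) / rr a2 y) by (field; auto).
    rewrite Cmod_div by auto. apply Rle_div_l; auto. }
  assert (HBl : (1 - ep <= Cmod B)%R).
  { assert (H := Cmod_rev 1 B). rewrite Cmod_1, Cmod_sub_sym in H. lra. }
  assert (HB0 : B <> 0) by (intro E; rewrite E, Cmod_0 in HBl; lra).
  assert (HU2y : U2 y <> 0).
  { intro E. apply HB0. unfold B. rewrite E. field. auto. }
  assert (Hexpr : Phi (- (Ci * RtoC t)) / (- Ci / (2 * (- (Ci * RtoC t)))) = A / B).
  { unfold Phi, Phi0. fold sq. fold S. rewrite Harg. unfold A, B. rewrite Hrr.
    replace (RtoC y * rr a1 y) with (RtoC t / S * rr a1 y) by (rewrite Hyt; reflexivity).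
    assert (RtoC t <> 0) by (intro E; injection E; lra).
    field. repeat split; auto. apply Ci_neq0. }
  rewrite Hexpr.
  replace (A / B - 1) with ((A - 1 - (B - 1)) / B) by (field; auto).
  rewrite Cmod_div by auto.
  apply (Rle_lt_trans _ (2 * ep / (1 - ep))).
  { apply Rle_div_l; [lra|]. 
    assert (H := Cmod_sub (A - 1) (B - 1)).
    assert (Cmod (A - 1 - (B - 1)) <= 2 * ep)%R by lra.
    assert (0 <= 2 * ep / (1 - ep))%R by (apply Rdiv_le_0_compat; lra).
    assert (2 * ep / (1 - ep) * (1 - ep) = 2 * ep)%R by (field; lra).
    assert (2 * ep / (1 - ep) * (1 - ep) <= 2 * ep / (1 - ep) * Cmod B)%R by (apply Rmult_le_compat_l; lra).
    lra. }
  apply (Rle_lt_trans _ (4 * ep)).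
  { apply Rle_div_l; [lra|]. nra. }
  lra.
Qed.
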